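(* Let $\mathcal U=(V,\tilde V,W,\tilde W,R)$ be a gradient space and let $\mathcal K\subseteq\mathrm{Sob}(\mathcal U)$ be a regular Rellich–Kondrachov cone containing a nonzero element. Then there exists $u\in\mathcal K$, $u\neq0$, such that $$\frac{\|g_u\|_W}{\|u\|_V}=\inf_{v\in\mathcal K,\ v\neq0}\frac{\|g_v\|_W}{\|v\|_V}>0.$$
   Context: Let $\tilde V,\tilde W$ be vector spaces over $\mathbf R$ or $\mathbf C$. A gradient relation is a set $R\subseteq\tilde V\times\tilde W$ such that (G1) if $(u,g)\in R$ and $(u',g')\in R$ then $(u+u',g+g')\in R$; (G2) if $(u,g)\in R$ and $\alpha>0$ then $(\alpha u,\alpha g)\in R$. A gradient space $\mathcal U=(V,\tilde V,W,\tilde W,R)$ consists of vector spaces $\tilde V,\tilde W$, a gradient relation $R\subseteq\tilde V\times\tilde W$, and linear subspaces $V\subseteq\tilde V$, $W\subseteq\tilde W$ such that: (GS1) $V$ is a reflexive Banach space with norm $\|\cdot\|_V$; (GS2) $W$ is a reflexive and strictly convex Banach space with norm $\|\cdot\|_W$; (GS3) if $(u,g)\in R$ with $u\in V$, $g\in W$, then there exists $g'\in W$ with $(-u,g')\in R$; (GS4) if $u,u_i\in V$ and $g,g_i\in W$ with $(u_i,g_i)\in R$ for $i=1,2,\dots$, $\|u-u_i\|_V\to0$ and $\|g-g_i\|_W\to0$, then $(u,g)\in R$. The Sobolev space of $\mathcal U$ is $\mathrm{Sob}(\mathcal U)=\{u\in V:(u,g)\in R\text{ for some }g\in W\}$. Each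 $u\in\mathrm{Sob}(\mathcal U)$ has a unique minimal gradient $g_u\in W$: $(u,g_u)\in R$ and $\|g_u\|_W\le\|g\|_W$ for all $g\in W$ with $(u,g)\in R$. A cone $\mathcal K\subseteq\mathrm{Sob}(\mathcal U)$ (i.e. $u\in\mathcal K,\alpha>0\Rightarrow\alpha u\in\mathcal K$) is a Rellich–Kondrachov cone if for every sequence $\{u_i\}\subseteq\mathcal K$ such that $\{u_i\}$ is bounded in $V$ and $\{g_{u_i}\}$ is bounded in $W$, there is a subsequence converging in $V$ to an element of $\mathcal K$. It is regular if, for $u\in\mathcal K$, $g_u=0$ implies $u=0$. *)

(* Defs.v *)
From Stdlib Require Import Reals Lra ClassicalEpsilon.
Open Scope R_scope.

Record VS := {
  car :> Type;
  vzero : car;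
  vadd : car -> car -> car;
  vopp : car -> car;
  vscal : R -> car -> car;
  vadd_assoc : forall x y z, vadd x (vadd y z) = vadd (vadd x y) z;
  vadd_comm : forall x y, vadd x y = vadd y x;
  vadd_0 : forall x, vadd x vzero = x;
  vadd_opp : forall x, vadd x (vopp x) = vzero;
  vscal_1 : forall x, vscal 1 x = x;
  vscal_assoc : forall a b x, vscal a (vscal b x) = vscal (a * b) x;
  vscal_distr_v : forall a x y, vscal a (vadd x y) = vadd (vscal a x) (vscal a y);
  vscal_distr_s : forall a b x, vscal (a + b) x = vadd (vscal a x) (vscal b x)
}.

Arguments vzero {v}.
Arguments vadd {v}.
Arguments vopp {v}.
Arguments vscal {v}.

Definition vsub {X : VS} (x y : X) : X := vadd x (vopp y).

(** A linear subspace [mem] of [X] carrying a norm [nrm] (only its values on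
    [mem] are meaningful). *)
Record NormedSub (X : VS) := {
  mem : X -> Prop;
  nrm : X -> R;
  mem_0 : mem vzero;
  mem_add : forall x y, mem x -> mem y -> mem (vadd x y);
  mem_scal : forall a x, mem x -> mem (vscal a x);
  nrm_nonneg : forall x, mem x -> 0 <= nrm x;
  nrm_eq0 : forall x, mem x -> nrm x = 0 -> x = vzero;
  nrm_scal : forall a x, mem x -> nrm (vscal a x) = Rabs a * nrm x;
  nrm_triangle : forall x y, mem x -> mem y -> nrm (vadd x y) <= nrm x + nrm y
}.

Arguments mem {X}.
Arguments nrm {X}.

Definition complete {X : VS} (V : NormedSub X) : Prop :=
  forall x : nat -> X, (forall n, mem V (x n)) ->
    (forall eps, eps > 0 -> exists N, forall m n, (m >= N)%nat -> (n >= N)%nat ->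
        nrm V (vsub (x m) (x n)) < eps) ->
    exists l, mem V l /\ Un_cv (fun n => nrm V (vsub (x n) l)) 0.

(** Continuous linear functionals on V (functions X -> R, only their values on V matter). *)
Definition is_dual_elt {X : VS} (V : NormedSub X) (f : X -> R) : Prop :=
  (forall x y, mem V x -> mem V y -> f (vadd x y) = f x + f y) /\
  (forall a x, mem V x -> f (vscal a x) = a * f x) /\
  (exists C, forall x, mem V x -> Rabs (f x) <= C * nrm V x).

Definition dual_bound {X : VS} (V : NormedSub X) (f : X -> R) (M : R) : Prop :=
  0 <= M /\ forall x, mem V x -> Rabs (f x) <= M * nrm V x.

Definition is_bidual_elt {X : VS} (V : NormedSub X) (Phi : (X -> R) -> R) : Prop :=
  (forall f g, is_dual_elt V f -> is_dual_elt V g ->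
     (forall x, mem V x -> f x = g x) -> Phi f = Phi g) /\
  (forall f g, is_dual_elt V f -> is_dual_elt V g ->
     Phi (fun x => f x + g x) = Phi f + Phi g) /\
  (forall a f, is_dual_elt V f -> Phi (fun x => a * f x) = a * Phi f) /\
  (exists C, forall f M, is_dual_elt V f -> dual_bound V f M -> Rabs (Phi f) <= C * M).

Definition reflexive {X : VS} (V : NormedSub X) : Prop :=
  forall Phi, is_bidual_elt V Phi ->
    exists x, mem V x /\ forall f, is_dual_elt V f -> Phi f = f x.

Definition reflexive_Banach {X : VS} (V : NormedSub X) : Prop :=
  complete V /\ reflexive V.

Definition strictly_convex {X : VS} (W : NormedSub X) : Prop :=
  forall x y, mem W x -> mem W y -> nrm W x = 1 -> nrm W y = 1 -> x <> y ->
    nrm W (vscal (1/2) (vadd x y)) < 1.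

Definition gradient_relation {X Y : VS} (Rel : X -> Y -> Prop) : Prop :=
  (forall u g u' g', Rel u g -> Rel u' g' -> Rel (vadd u u') (vadd g g')) /\
  (forall u g a, Rel u g -> a > 0 -> Rel (vscal a u) (vscal a g)).

(** Gradient space (V, X, W, Y, Rel), X = tilde V, Y = tilde W. *)
Definition gradient_space {X Y : VS} (V : NormedSub X) (W : NormedSub Y)
  (Rel : X -> Y -> Prop) : Prop :=
  gradient_relation Rel /\
  reflexive_Banach V /\
  (reflexive_Banach W /\ strictly_convex W) /\
  (forall u g, Rel u g -> mem V u -> mem W g ->
      exists g', mem W g' /\ Rel (vopp u) g') /\
  (forall u g (us : nat -> X) (gs : nat -> Y),
      mem V u -> mem W g -> (forall i, mem V (us i)) -> (forall i, mem W (gs i)) ->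
      (forall i, Rel (us i) (gs i)) ->
      Un_cv (fun i => nrm V (vsub u (us i))) 0 ->
      Un_cv (fun i => nrm W (vsub g (gs i))) 0 ->
      Rel u g).

Definition Sob {X Y : VS} (V : NormedSub X) (W : NormedSub Y)
  (Rel : X -> Y -> Prop) (u : X) : Prop :=
  mem V u /\ exists g, mem W g /\ Rel u g.

Definition is_min_grad {X Y : VS} (W : NormedSub Y) (Rel : X -> Y -> Prop)
  (u : X) (g : Y) : Prop :=
  mem W g /\ Rel u g /\ forall g', mem W g' -> Rel u g' -> nrm W g <= nrm W g'.

(** The minimal gradient g_u (chosen by Hilbert's epsilon; it exists and is
    unique for u in Sob in a gradient space). *)
Definition mingrad {X Y : VS} (W : NormedSub Y) (Rel : X -> Y -> Prop) (u : X) : Y :=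
  epsilon (inhabits (@vzero Y)) (fun g => is_min_grad W Rel u g).

Definition is_cone {X Y : VS} (V : NormedSub X) (W : NormedSub Y)
  (Rel : X -> Y -> Prop) (K : X -> Prop) : Prop :=
  (forall u, K u -> Sob V W Rel u) /\
  (forall u a, K u -> a > 0 -> K (vscal a u)).

Definition RK_cone {X Y : VS} (V : NormedSub X) (W : NormedSub Y)
  (Rel : X -> Y -> Prop) (K : X -> Prop) : Prop :=
  is_cone V W Rel K /\
  forall us : nat -> X, (forall i, K (us i)) ->
    (exists M, forall i, nrm V (us i) <= M) ->
    (exists M, forall i, nrm W (mingrad W Rel (us i)) <= M) ->
    exists (phi : nat -> nat) (u : X),
      (forall i, (phi i < phi (S i))%nat) /\ K u /\
      Un_cv (fun i => nrm V (vsub (us (phi i)) u)) 0.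

Definition regular_cone {X Y : VS} (W : NormedSub Y)
  (Rel : X -> Y -> Prop) (K : X -> Prop) : Prop :=
  forall u, K u -> mingrad W Rel u = vzero -> u = vzero.

Definition is_inf (E : R -> Prop) (m : R) : Prop :=
  (forall x, E x -> m <= x) /\ (forall b, (forall x, E x -> b <= x) -> b <= m).

(* Main.v *)
Require Import Defs.
From Stdlib Require Import Reals Lra Lia ZArith List ClassicalEpsilon Classical FunctionalExtensionality.
From mathcomp Require classical_sets boolp ssrbool.
Open Scope R_scope.

Lemma zorn_prop (T : Type) (t0 : T) (Rl : T -> T -> Prop) :
  (forall t, Rl t t) -> (forall r s t, Rl r s -> Rl s t -> Rl r t) ->
  (forall A : T -> Prop, (forall s t, A s -> A t -> Rl s t \/ Rl t s) ->
      exists t, forall s, A s -> Rl s t) ->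
  exists t, forall s, Rl t s -> Rl s t.
Proof.
  intros Hr Ht Hc.
  assert (E : forall a b, Rl a b <-> is_true (boolp.asbool (Rl a b))).
  { intros a b; split; intro H.
    - exact (ssrbool.introT (boolp.asboolP _) H).
    - exact (ssrbool.elimT (boolp.asboolP _) H). }
  destruct (@classical_sets.ZL_preorder T t0 (fun a b => boolp.asbool (Rl a b))) as [t Hm].
  - intro t; apply E, Hr.
  - intros r s t H1 H2; apply E; apply E in H1; apply E in H2; eauto.
  - intros A HA. destruct (Hc A) as [t Ht'].
    + intros s t Hs Htt; destruct (HA s t Hs Htt) as [H|H]; [left|right]; apply E; exact H.
    + exists t; intros s Hs; apply E; auto.
  - exists t; intros s Hs. apply E. apply Hm. apply E. exact Hs.
Qed.

Section VSL.
Context {X : VS}.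
Implicit Types x y z : X.

Lemma v0l x : vadd vzero x = x.
Proof. rewrite vadd_comm; apply vadd_0. Qed.
Lemma voppl x : vadd (vopp x) x = vzero.
Proof. rewrite vadd_comm; apply vadd_opp. Qed.
Lemma vcancel x y z : vadd x y = vadd x z -> y = z.
Proof.
  intro H. rewrite <- (v0l y), <- (v0l z), <- (voppl x), <- !vadd_assoc, H. reflexivity.
Qed.
Lemma vscal0 x : vscal 0 x = vzero.
Proof.
  apply (vcancel (vscal 0 x)). rewrite vadd_0, <- vscal_distr_s. f_equal; ring.
Qed.
Lemma vscal_z a : vscal a (@vzero X) = vzero.
Proof.
  apply (vcancel (vscal a vzero)). rewrite vadd_0, <- vscal_distr_v, vadd_0. reflexivity.
Qed.
Lemma vopp_scal x : vopp x = vscal (-1) x.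
Proof.
  apply (vcancel x). rewrite vadd_opp. rewrite <- (vscal_1 _ x) at 1.
  rewrite <- vscal_distr_s. replace (1 + -1) with 0 by ring. symmetry; apply vscal0.
Qed.
Lemma vsubE x y : vsub x y = vadd x (vscal (-1) y).
Proof. unfold vsub; rewrite vopp_scal; reflexivity. Qed.
Lemma vsub_eq0 x y : vsub x y = vzero -> x = y.
Proof.
  intro H. apply (vcancel (vopp y)). rewrite voppl, vadd_comm. exact H.
Qed.
Lemma vadd_sw x y z w : vadd (vadd x y) (vadd z w) = vadd (vadd x z) (vadd y w).
Proof.
  rewrite <- !vadd_assoc. f_equal. rewrite !vadd_assoc. f_equal. apply vadd_comm.
Qed.
Lemma vsub_swap x y : vsub y x = vscal (-1) (vsub x y).
Proof.
  rewrite !vsubE, vscal_distr_v, !vscal_assoc. replace (-1 * -1) with 1 by ring.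
  rewrite vscal_1, vadd_comm. reflexivity.
Qed.
Lemma vsub_add x y : vadd (vsub x y) y = x.
Proof. unfold vsub. rewrite <- vadd_assoc, voppl, vadd_0. reflexivity. Qed.
Lemma vscal_sub a x y : vscal a (vsub x y) = vsub (vscal a x) (vscal a y).
Proof. rewrite !vsubE, vscal_distr_v, !vscal_assoc. f_equal. f_equal. ring. Qed.
Lemma vsub_addadd x y z w : vsub (vadd x y) (vadd z w) = vadd (vsub x z) (vsub y w).
Proof. rewrite !vsubE, vscal_distr_v. apply vadd_sw. Qed.
Lemma vsub_self x : vsub x x = vzero.
Proof. apply vadd_opp. Qed.
Lemma vsub_0 x : vsub x vzero = x.
Proof. rewrite vsubE, vscal_z, vadd_0; reflexivity. Qed.
Lemma vscal_eq0 a x : vscal a x = vzero -> a <> 0 -> x = vzero.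
Proof.
  intros H Ha. rewrite <- (vscal_1 _ x). replace 1 with (/a * a) by (field; auto).
  rewrite <- vscal_assoc, H, vscal_z. reflexivity.
Qed.
End VSL.

Section NSL.
Context {X : VS} (V : NormedSub X).
Lemma mem_sub x y : mem V x -> mem V y -> mem V (vsub x y).
Proof. intros; rewrite vsubE; apply mem_add; auto; apply mem_scal; auto. Qed.
Lemma nrm_sym x y : mem V x -> mem V y -> nrm V (vsub x y) = nrm V (vsub y x).
Proof.
  intros. rewrite (vsub_swap x y), nrm_scal by (apply mem_sub; auto).
  replace (Rabs (-1)) with 1 by (rewrite Rabs_left; lra); ring.
Qed.
Lemma nrm_scal_pos a x : 0 <= a -> mem V x -> nrm V (vscal a x) = a * nrm V x.
Proof. intros; rewrite nrm_scal, Rabs_right; auto; lra. Qed.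
Lemma nrm_zero : nrm V vzero = 0.
Proof. rewrite <- (vscal0 vzero), nrm_scal by apply mem_0. rewrite Rabs_R0; ring. Qed.
Lemma nrm_sub_tri x y z : mem V x -> mem V y -> mem V z ->
  nrm V (vsub x z) <= nrm V (vsub x y) + nrm V (vsub y z).
Proof.
  intros. replace (vsub x z) with (vadd (vsub x y) (vsub y z)).
  - apply nrm_triangle; apply mem_sub; auto.
  - unfold vsub. rewrite vadd_assoc. f_equal. rewrite <- vadd_assoc, voppl, vadd_0. reflexivity.
Qed.
Lemma nrm_rev_tri x y : mem V x -> mem V y -> nrm V x - nrm V y <= nrm V (vsub x y).
Proof.
  intros. pose proof (nrm_triangle _ V (vsub x y) y (mem_sub x y H H0) H0).
  rewrite vsub_add in H1. lra.
Qed.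
End NSL.

Inductive ve := VAt (n : nat) | VZ | VAdd (a b : ve) | VSc (r : R) (a : ve) | VOpp (a : ve) | VSub (a b : ve).

Fixpoint veval {X : VS} (env : list X) (e : ve) : X :=
  match e with
  | VAt n => nth n env vzero
  | VZ => vzero
  | VAdd a b => vadd (veval env a) (veval env b)
  | VSc r a => vscal r (veval env a)
  | VOpp a => vopp (veval env a)
  | VSub a b => vsub (veval env a) (veval env b)
  end.

Fixpoint lc {X : VS} (env : list X) (cs : list R) : X :=
  match env, cs with
  | x :: e, c :: cs' => vadd (vscal c x) (lc e cs')
  | _, _ => vzero
  end.

Fixpoint ladd (cs ds : list R) : list R :=
  match cs, ds with
  | nil, _ => ds
  | _, nil => cs
  | c :: cs', d :: ds' => (c + d) :: ladd cs' ds'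
  end.

Fixpoint lunit (m : nat) : list R :=
  match m with O => 1 :: nil | S m' => 0 :: lunit m' end.

Fixpoint nf (e : ve) : list R :=
  match e with
  | VAt n => lunit n
  | VZ => nil
  | VAdd a b => ladd (nf a) (nf b)
  | VSc r a => map (fun c => r * c) (nf a)
  | VOpp a => map (fun c => -1 * c) (nf a)
  | VSub a b => ladd (nf a) (map (fun c => -1 * c) (nf b))
  end.

Lemma lc_nil {X : VS} (env : list X) : lc env nil = vzero.
Proof. destruct env; reflexivity. Qed.

Lemma lc_add {X : VS} (env : list X) cs ds : lc env (ladd cs ds) = vadd (lc env cs) (lc env ds).
Proof.
  revert cs ds; induction env as [|x e IH]; intros cs ds; simpl.
  - rewrite vadd_0; reflexivity.
  - destruct cs as [|c cs]; destruct ds as [|d ds]; simpl.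
    + rewrite vadd_0; reflexivity.
    + rewrite v0l; reflexivity.
    + rewrite vadd_0; reflexivity.
    + rewrite IH, vscal_distr_s. apply vadd_sw.
Qed.

Lemma lc_scal {X : VS} (env : list X) r cs : lc env (map (fun c => r * c) cs) = vscal r (lc env cs).
Proof.
  revert cs; induction env as [|x e IH]; intros cs; simpl.
  - rewrite vscal_z; reflexivity.
  - destruct cs as [|c cs]; simpl.
    + rewrite vscal_z; reflexivity.
    + rewrite IH, vscal_distr_v, vscal_assoc. reflexivity.
Qed.

Lemma lc_unit {X : VS} (env : list X) m : lc env (lunit m) = nth m env vzero.
Proof.
  revert m; induction env as [|x e IH]; intros m; simpl.
  - destruct m; reflexivity.
  - destruct m; simpl.
    + rewrite vscal_1, lc_nil, vadd_0. reflexivity.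
    + rewrite IH, vscal0, v0l. reflexivity.
Qed.

Lemma veval_nf {X : VS} (env : list X) e : veval env e = lc env (nf e).
Proof.
  induction e; simpl.
  - rewrite lc_unit; reflexivity.
  - rewrite lc_nil; reflexivity.
  - rewrite lc_add, IHe1, IHe2; reflexivity.
  - rewrite lc_scal, IHe; reflexivity.
  - rewrite lc_scal, IHe, vopp_scal; reflexivity.
  - rewrite lc_add, lc_scal, IHe1, IHe2, vsubE; reflexivity.
Qed.

Fixpoint allz (l : list R) : Prop :=
  match l with nil => True | c :: l' => c = 0 /\ allz l' end.

Fixpoint eqz (cs ds : list R) : Prop :=
  match cs with
  | nil => allz ds
  | c :: cs' => match ds with nil => allz cs | d :: ds' => c = d /\ eqz cs' ds' end
  end.

Lemma allz_lc {X : VS} (env : list X) cs : allz cs -> lc env cs = vzero.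
Proof.
  revert cs; induction env as [|x e IH]; intros cs H; simpl; auto.
  destruct cs as [|c cs]; auto. destruct H as [-> H]. rewrite vscal0, v0l. auto.
Qed.

Lemma eqz_lc {X : VS} (env : list X) cs ds : eqz cs ds -> lc env cs = lc env ds.
Proof.
  revert cs ds; induction env as [|x e IH]; intros cs ds H.
  - destruct cs, ds; reflexivity.
  - destruct cs as [|c cs].
    + simpl in H. rewrite lc_nil. symmetry. apply allz_lc; auto.
    + destruct ds as [|d ds].
      * rewrite lc_nil. apply allz_lc; auto.
      * destruct H as [-> H]. simpl. rewrite (IH cs ds H). reflexivity.
Qed.

Ltac find_idx x l :=
  match l with
  | x :: _ => constr:(O)
  | _ :: ?l' => let n := find_idx x l' in constr:(S n)
  end.

Ltac reify env t :=
  match t with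
  | @vadd _ ?a ?b => let ra := reify env a in let rb := reify env b in constr:(VAdd ra rb)
  | @vsub _ ?a ?b => let ra := reify env a in let rb := reify env b in constr:(VSub ra rb)
  | @vscal _ ?r ?a => let ra := reify env a in constr:(VSc r ra)
  | @vopp _ ?a => let ra := reify env a in constr:(VOpp ra)
  | @vzero _ => constr:(VZ)
  | _ => let n := find_idx t env in constr:(VAt n)
  end.

Ltac vring env :=
  match goal with
  | |- ?l = ?r =>
    let rl := reify env l in let rr := reify env r in
    change (veval env rl = veval env rr);
    rewrite !veval_nf; apply eqz_lc; simpl; repeat split; try ring; try (field; lra)
  end.


Lemma veq_move {X : VS} (a b c e : X) : vadd a b = vadd c e -> vsub b e = vsub c a.
Proof.
  intro H. apply (vcancel a). unfold vsub.
  rewrite vadd_assoc, H, <- vadd_assoc, vadd_opp, vadd_0.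
  rewrite vadd_comm, <- vadd_assoc, voppl, vadd_0. reflexivity.
Qed.

Lemma vsub_scal {X : VS} (t1 t2 : R) (y : X) : vsub (vscal t1 y) (vscal t2 y) = vscal (t1 - t2) y.
Proof. rewrite vsubE, vscal_assoc, <- vscal_distr_s. f_equal; ring. Qed.

Lemma vscal_comb {X : VS} (s k : R) (d y : X) : s <> 0 ->
  vscal s (vadd (vscal (/s) d) (vscal k y)) = vadd d (vscal (s*k) y).
Proof.
  intro Hs. rewrite vscal_distr_v, !vscal_assoc. replace (s * / s) with 1 by (field; auto).
  rewrite vscal_1. reflexivity.
Qed.

Section HB.
Context {Z : VS} (M : Z -> Prop) (p : Z -> R).
Hypothesis M0 : M vzero.
Hypothesis Madd : forall x y, M x -> M y -> M (vadd x y).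
Hypothesis Mscal : forall a x, M x -> M (vscal a x).
Hypothesis padd : forall x y, M x -> M y -> p (vadd x y) <= p x + p y.
Hypothesis pscal : forall a x, 0 <= a -> M x -> p (vscal a x) = a * p x.

Definition lin_on (D : Z -> Prop) (g : Z -> R) :=
  (forall x y, D x -> D y -> g (vadd x y) = g x + g y) /\
  (forall a x, D x -> g (vscal a x) = a * g x).
Definition subsp (D : Z -> Prop) :=
  D vzero /\ (forall x y, D x -> D y -> D (vadd x y)) /\ (forall a x, D x -> D (vscal a x)).
Definition pext (D : Z -> Prop) (g : Z -> R) :=
  subsp D /\ (forall x, D x -> M x) /\ lin_on D g /\ (forall x, D x -> g x <= p x).

Lemma p0 : p vzero = 0.
Proof. rewrite <- (vscal0 (@vzero Z)), pscal by (auto; lra). ring. Qed.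

Lemma uniq_rep (D : Z -> Prop) (y d1 d2 : Z) t1 t2 : subsp D -> ~ D y -> D d1 -> D d2 ->
  vadd d1 (vscal t1 y) = vadd d2 (vscal t2 y) -> t1 = t2 /\ d1 = d2.
Proof.
  intros [HD0 [HDa HDs]] Hy H1 H2 E.
  assert (Ht : t1 = t2).
  { destruct (Req_dec t1 t2) as [|Hne]; auto. exfalso. apply Hy.
    apply veq_move in E. rewrite vsub_scal in E.
    replace y with (vscal (/(t1 - t2)) (vscal (t1 - t2) y)).
    - rewrite E. apply HDs. rewrite vsubE. apply HDa; auto.
    - rewrite vscal_assoc. replace (/ (t1 - t2) * (t1 - t2)) with 1 by (field; lra).
      apply vscal_1. }
  split; auto. subst t2. rewrite (vadd_comm _ d1), (vadd_comm _ d2) in E.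
  apply vcancel in E. exact E.
Qed.

Lemma BE (D : Z -> Prop) (g : Z -> R) (y : Z) (c : R) :
  pext D g -> M y -> ~ D y ->
  (forall d t, D d -> g d + t * c <= p (vadd d (vscal t y))) ->
  exists D' g', pext D' g' /\ (forall x, D x -> D' x /\ g' x = g x) /\ D' y /\ g' y = c.
Proof.
  intros [HS [HM [[Ga Gs] Gp]]] My Hy Hc.
  pose (D' := fun z => exists d t, D d /\ z = vadd d (vscal t y)).
  pose (pr z := epsilon (inhabits (@vzero Z, 0)) (fun pr => D (fst pr) /\ z = vadd (fst pr) (vscal (snd pr) y))).
  pose (g' z := g (fst (pr z)) + snd (pr z) * c).
  assert (Hg' : forall d t, D d -> g' (vadd d (vscal t y)) = g d + t * c).
  { intros d t Hd. unfold g'.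
    assert (Hs : D (fst (pr (vadd d (vscal t y)))) /\ vadd d (vscal t y) = vadd (fst (pr (vadd d (vscal t y)))) (vscal (snd (pr (vadd d (vscal t y)))) y)).
    { unfold pr. apply epsilon_spec. exists (d, t). simpl; auto. }
    revert Hs. generalize (pr (vadd d (vscal t y))). intros [d' t'] [Hs1 Hs2]. simpl in *.
    destruct (uniq_rep D y d d' t t' HS Hy Hd Hs1 Hs2) as [E1 E2]. subst. reflexivity. }
  destruct HS as [HD0 [HDa HDs]].
  assert (Hsum : forall d1 t1 d2 t2, vadd (vadd d1 (vscal t1 y)) (vadd d2 (vscal t2 y)) = vadd (vadd d1 d2) (vscal (t1 + t2) y)).
  { intros. rewrite vadd_sw, vscal_distr_s. reflexivity. }
  assert (Hsc : forall a d t, vscal a (vadd d (vscal t y)) = vadd (vscal a d) (vscal (a * t) y)).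
  { intros. rewrite vscal_distr_v, vscal_assoc. reflexivity. }
  exists D', g'. split; [|split; [|split]].
  - split; [split; [|split] | split; [|split]].
    + exists vzero, 0. split; auto. rewrite vscal0, vadd_0. reflexivity.
    + intros x z [d1 [t1 [H1 ->]]] [d2 [t2 [H2 ->]]]. exists (vadd d1 d2), (t1 + t2). split; auto.
    + intros a x [d [t [H ->]]]. exists (vscal a d), (a * t). split; auto.
    + intros x [d [t [H ->]]]. apply Madd; auto.
    + split.
      * intros x z [d1 [t1 [H1 ->]]] [d2 [t2 [H2 ->]]]. rewrite Hsum, !Hg', Ga by auto. ring.
      * intros a x [d [t [H ->]]]. rewrite Hsc, !Hg', Gs by auto. ring.
    + intros x [d [t [H ->]]]. rewrite Hg' by auto. apply Hc; auto.
  - intros x Hx. assert (E : x = vadd x (vscal 0 y)) by (rewrite vscal0, vadd_0; reflexivity).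
    split. exists x, 0; auto. rewrite E at 1. rewrite Hg' by auto. ring.
  - exists vzero, 1. split; auto. rewrite vscal_1, v0l. reflexivity.
  - assert (E : y = vadd vzero (vscal 1 y)) by (rewrite vscal_1, v0l; reflexivity).
    rewrite E, Hg' by auto. assert (g vzero = 0).
    { rewrite <- (vscal0 (@vzero Z)), Gs by auto. ring. }
    rewrite H; ring.
Qed.

Lemma EXC (D : Z -> Prop) (g : Z -> R) (y : Z) :
  pext D g -> M y -> exists c, forall d t, D d -> g d + t * c <= p (vadd d (vscal t y)).
Proof.
  intros [HS [HM [[Ga Gs] Gp]]] My. destruct HS as [HD0 [HDa HDs]].
  assert (KI : forall d1 d2, D d1 -> D d2 ->
     g d1 - p (vadd d1 (vscal (-1) y)) <= p (vadd d2 (vscal 1 y)) - g d2).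
  { intros d1 d2 H1 H2.
    assert (E : vadd d1 d2 = vadd (vadd d1 (vscal (-1) y)) (vadd d2 (vscal 1 y))).
    { rewrite vadd_sw, <- vscal_distr_s. replace (-1 + 1) with 0 by ring.
      rewrite vscal0, vadd_0. reflexivity. }
    pose proof (Gp _ (HDa _ _ H1 H2)). rewrite Ga in H by auto. rewrite E in H.
    pose proof (padd (vadd d1 (vscal (-1) y)) (vadd d2 (vscal 1 y))). 
    assert (M (vadd d1 (vscal (-1) y))) by (apply Madd; auto).
    assert (M (vadd d2 (vscal 1 y))) by (apply Madd; auto).
    specialize (H0 H3 H4). lra. }
  pose (A := fun r => exists d, D d /\ r = g d - p (vadd d (vscal (-1) y))).
  assert (Hb : bound A).
  { exists (p (vadd vzero (vscal 1 y)) - g vzero). intros r [d [Hd ->]]. apply KI; auto. }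
  assert (Hne : exists r, A r) by (exists (g vzero - p (vadd vzero (vscal (-1) y))); exists vzero; auto).
  destruct (completeness A Hb Hne) as [c [Hub Hlub]].
  exists c. intros d t Hd.
  destruct (Rtotal_order t 0) as [Ht | [Ht | Ht]].
  -
    set (s := - t).
    assert (Hs : s <> 0) by (unfold s; lra).
    assert (A (g (vscal (/s) d) - p (vadd (vscal (/s) d) (vscal (-1) y)))) by (exists (vscal (/s) d); auto).
    apply Hub in H. rewrite Gs in H by auto.
    pose proof (vscal_comb s (-1) d y Hs). replace (s * -1) with t in H0 by (unfold s; ring).
    rewrite <- H0, pscal by (unfold s; try lra; apply Madd; auto).
    assert (s * (/ s * g d - p (vadd (vscal (/ s) d) (vscal (-1) y))) <= s * c).
    { apply Rmult_le_compat_l; unfold s in *; lra. }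
    replace (s * (/ s * g d - p (vadd (vscal (/ s) d) (vscal (-1) y)))) with
      (g d - s * p (vadd (vscal (/ s) d) (vscal (-1) y))) in H1 by (field; auto).
    unfold s in *. lra.
  - subst t. rewrite vscal0, vadd_0. rewrite Rmult_0_l, Rplus_0_r. apply Gp; auto.
  - assert (Hs : t <> 0) by lra.
    assert (c <= p (vadd (vscal (/t) d) (vscal 1 y)) - g (vscal (/t) d)).
    { apply Hlub. intros r [d1 [Hd1 ->]]. apply KI; auto. }
    rewrite Gs in H by auto.
    pose proof (vscal_comb t 1 d y Hs). replace (t * 1) with t in H0 by ring.
    rewrite <- H0, pscal by (try lra; apply Madd; auto).
    assert (t * c <= t * (p (vadd (vscal (/ t) d) (vscal 1 y)) - / t * g d)) by (apply Rmult_le_compat_l; lra).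
    replace (t * (p (vadd (vscal (/ t) d) (vscal 1 y)) - / t * g d)) with
      (t * p (vadd (vscal (/ t) d) (vscal 1 y)) - g d) in H1 by (field; auto).
    lra.
Qed.

Theorem HB (x0 : Z) : M x0 ->
  exists f, lin_on M f /\ (forall x, M x -> f x <= p x) /\ f x0 = p x0.
Proof.
  intro Mx0.
  pose (ok := fun dg : (Z -> Prop) * (Z -> R) => pext (fst dg) (snd dg) /\ fst dg x0 /\ snd dg x0 = p x0).
  pose (T := {dg | ok dg}).
  pose (Rl := fun s t : T => forall x, fst (proj1_sig s) x -> fst (proj1_sig t) x /\ snd (proj1_sig t) x = snd (proj1_sig s) x).
  assert (Hbase : pext (fun z => z = vzero) (fun _ => 0)).
  { split; [split; [|split] | split; [|split]].
    - reflexivity.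
    - intros x y -> ->. apply vadd_0.
    - intros a x ->. apply vscal_z.
    - intros x ->; auto.
    - split; intros; ring.
    - intros x ->. rewrite p0. lra. }
  assert (t0 : T).
  { destruct (excluded_middle_informative (x0 = vzero)) as [E|NE].
    - exists (fun z => z = vzero, fun _ => 0). split; auto. simpl. split; auto.
      rewrite E, p0; reflexivity.
    - apply constructive_indefinite_description.
      destruct (BE (fun z => z = vzero) (fun _ => 0) x0 (p x0) Hbase Mx0 NE) as [D' [g' [H1 [H2 [H3 H4]]]]].
      + intros d t ->. rewrite v0l. destruct (Rle_or_lt 0 t).
        * rewrite pscal by auto. lra.
        * replace (vscal t x0) with (vscal (-t) (vscal (-1) x0)) by (rewrite vscal_assoc; f_equal; ring).
          rewrite pscal by (try lra; apply Mscal; auto).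
          pose proof (padd x0 (vscal (-1) x0) Mx0 (Mscal _ _ Mx0)).
          assert (E0 : vadd x0 (vscal (-1) x0) = vzero) by (rewrite <- vopp_scal; apply vadd_opp).
          rewrite E0, p0 in H0.
          assert (0 <= -t * (p x0 + p (vscal (-1) x0))) by (apply Rmult_le_pos; lra). lra.
      + exists (D', g'). split; [exact H1|split; simpl; auto]. }
  destruct (zorn_prop T t0 Rl) as [t Ht].
  - intros s x Hx; auto.
  - intros r s u H1 H2 x Hx. destruct (H1 x Hx). destruct (H2 x H). split; auto. congruence.
  - intros A Htot. destruct (classic (exists s, A s)) as [[s0 As0]|NA].
    2:{ exists t0. intros s As; exfalso; eauto. }
    pose (D := fun x => exists s, A s /\ fst (proj1_sig s) x).
    pose (gsel x := epsilon (inhabits t0) (fun s => A s /\ fst (proj1_sig s) x)).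
    pose (G x := snd (proj1_sig (gsel x)) x).
    assert (Gspec : forall s x, A s -> fst (proj1_sig s) x -> G x = snd (proj1_sig s) x).
    { intros s x As Hx. assert (Hs : A (gsel x) /\ fst (proj1_sig (gsel x)) x).
      { unfold gsel. apply epsilon_spec. exists s; auto. }
      destruct Hs as [Hs1 Hs2]. unfold G.
      destruct (Htot s (gsel x) As Hs1) as [E|E].
      - destruct (E x Hx); auto.
      - destruct (E x Hs2); auto. }
    assert (Both : forall s1 s2 x y, A s1 -> A s2 -> fst (proj1_sig s1) x -> fst (proj1_sig s2) y ->
       exists s, A s /\ fst (proj1_sig s) x /\ fst (proj1_sig s) y).
    { intros s1 s2 x y A1 A2 H1 H2. destruct (Htot s1 s2 A1 A2) as [E|E].
      - exists s2. split; auto. split; auto. apply E; auto.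
      - exists s1. split; auto. split; auto. apply E; auto. }
    assert (Hok : forall s : T, pext (fst (proj1_sig s)) (snd (proj1_sig s))) by (intro s; exact (proj1 (proj2_sig s))).
    assert (okU : ok (D, G)).
    { destruct (proj2_sig s0) as [[[S0 _] _] [P1 P2]].
      split; [split; [split; [|split] | split; [|split]] | split].
      - exists s0. auto.
      - intros x y [s1 [A1 H1]] [s2 [A2 H2]].
        destruct (Both s1 s2 x y A1 A2 H1 H2) as [s [As [Hx Hy]]].
        exists s. split; auto. destruct (Hok s) as [[_ [Sa _]] _]. auto.
      - intros a x [s1 [A1 H1]]. exists s1. split; auto.
        destruct (Hok s1) as [[_ [_ Ss]] _]. auto.
      - intros x [s1 [A1 H1]]. destruct (Hok s1) as [_ [HMs _]]. auto.
      - split.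
        + intros x y [s1 [A1 H1]] [s2 [A2 H2]].
          destruct (Both s1 s2 x y A1 A2 H1 H2) as [s [As [Hx Hy]]].
          simpl. rewrite (Gspec s x), (Gspec s y), (Gspec s (vadd x y)); auto.
          * destruct (Hok s) as [_ [_ [[La _] _]]]. auto.
          * destruct (Hok s) as [[_ [Sa _]] _]. auto.
        + intros a x [s1 [A1 H1]]. simpl. rewrite (Gspec s1 x), (Gspec s1 (vscal a x)); auto.
          * destruct (Hok s1) as [_ [_ [[_ Ls] _]]]. auto.
          * destruct (Hok s1) as [[_ [_ Ss]] _]. auto.
      - intros x [s1 [A1 H1]]. simpl. rewrite (Gspec s1 x); auto.
        destruct (Hok s1) as [_ [_ [_ Ps]]]. auto.
      - exists s0. auto.
      - change (G x0 = p x0). rewrite (Gspec s0 x0); auto. }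
    exists (exist _ (D, G) okU). intros s As x Hx. simpl. split.
    + exists s; auto.
    + apply Gspec; auto.
  - destruct t as [[Dt gt] [Pt [Dx0 gx0]]] eqn:Et.
    assert (Full : forall y, M y -> Dt y).
    { intros y My. apply NNPP. intro NDy.
      destruct (EXC Dt gt y Pt My) as [c Hc].
      destruct (BE Dt gt y c Pt My NDy Hc) as [D' [g' [H1 [H2 [H3 H4]]]]].
      assert (ok' : ok (D', g')).
      { split; auto. simpl. split. apply H2; auto. destruct (H2 x0 Dx0) as [_ E]. rewrite E; auto. }
      pose proof (Ht (exist _ (D', g') ok')) as Hm.
      assert (Hr : Rl t (exist _ (D', g') ok')).
      { rewrite Et. intros x Hx. simpl in *. auto. }
      rewrite Et in Hr. specialize (Hm Hr). destruct (Hm y H3) as [Hy _]. simpl in Hy. auto. }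
    pose proof Pt as [_ [HM [[La Ls] Pp]]]. simpl in *.
    exists gt. split; [split|split]; auto.
Qed.
End HB.

Lemma inf_ex (E : R -> Prop) : (exists x, E x) -> (exists m, forall x, E x -> m <= x) ->
  exists m, is_inf E m.
Proof.
  intros [x Ex] [m Hm].
  assert (Hb : bound (fun y => E (- y))).
  { exists (- m). intros y Hy. apply Hm in Hy. lra. }
  assert (Hn : exists y, E (- y)) by (exists (- x); rewrite Ropp_involutive; auto).
  destruct (completeness _ Hb Hn) as [l [Hu Hl]].
  exists (- l). split.
  - intros z Ez. assert (- z <= l) by (apply Hu; rewrite Ropp_involutive; auto). lra.
  - intros b Hb'. assert (l <= - b).
    { apply Hl. intros y Hy. apply Hb' in Hy. lra. } lra.
Qed.

Lemma inf_approx (E : R -> Prop) m : is_inf E m -> forall eps, eps > 0 ->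
  exists x, E x /\ x < m + eps.
Proof.
  intros [H1 H2] eps He. apply NNPP. intro N.
  assert (m + eps <= m).
  { apply H2. intros x Ex. apply Rnot_lt_le. intro. apply N. exists x; auto. }
  lra.
Qed.

Definition Rinf (E : R -> Prop) : R := epsilon (inhabits 0) (is_inf E).

Lemma Rinf_spec E : (exists x, E x) -> (exists m, forall x, E x -> m <= x) -> is_inf E (Rinf E).
Proof. intros. unfold Rinf. apply epsilon_spec. apply inf_ex; auto. Qed.

Lemma le_eps a b : (forall eps, eps > 0 -> a <= b + eps) -> a <= b.
Proof.
  intro H. apply Rnot_lt_le. intro. specialize (H ((a - b)/2)). lra.
Qed.

Section ConeDist.
Context {Y : VS} (W : NormedSub Y) (Q : Y -> Prop).
Hypothesis QW : forall q, Q q -> mem W q.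
Hypothesis Q0 : Q vzero.
Hypothesis Qadd : forall q1 q2, Q q1 -> Q q2 -> Q (vadd q1 q2).
Hypothesis Qscal : forall a q, a > 0 -> Q q -> Q (vscal a q).

Definition DQ x := fun r => exists q, Q q /\ r = nrm W (vsub x q).
Definition pQ x := Rinf (DQ x).

Lemma pQ_spec x : mem W x -> is_inf (DQ x) (pQ x).
Proof.
  intro Hx. apply Rinf_spec.
  - exists (nrm W (vsub x vzero)). exists vzero; auto.
  - exists 0. intros r [q [Hq ->]]. apply nrm_nonneg, mem_sub; auto.
Qed.

Lemma pQ_lb x q : mem W x -> Q q -> pQ x <= nrm W (vsub x q).
Proof. intros Hx Hq. apply (proj1 (pQ_spec x Hx)). exists q; auto. Qed.

Lemma pQ_ge0 x : mem W x -> 0 <= pQ x.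
Proof.
  intro Hx. apply (proj2 (pQ_spec x Hx)). intros r [q [Hq ->]]. apply nrm_nonneg, mem_sub; auto.
Qed.

Lemma pQ_le_nrm x : mem W x -> pQ x <= nrm W x.
Proof. intro Hx. pose proof (pQ_lb x vzero Hx Q0). rewrite vsub_0 in H. auto. Qed.

Lemma pQ_Q q : Q q -> pQ q = 0.
Proof.
  intro Hq. apply Rle_antisym. 2: apply pQ_ge0; auto.
  pose proof (pQ_lb q q (QW q Hq) Hq). rewrite vsub_self, nrm_zero in H. auto.
Qed.

Lemma pQ_add x y : mem W x -> mem W y -> pQ (vadd x y) <= pQ x + pQ y.
Proof.
  intros Hx Hy. apply le_eps. intros eps He.
  destruct (inf_approx _ _ (pQ_spec x Hx) (eps/2)) as [r1 [[q1 [Hq1 ->]] L1]]; [lra|].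
  destruct (inf_approx _ _ (pQ_spec y Hy) (eps/2)) as [r2 [[q2 [Hq2 ->]] L2]]; [lra|].
  pose proof (pQ_lb (vadd x y) (vadd q1 q2) (mem_add _ _ _ _ Hx Hy) (Qadd _ _ Hq1 Hq2)).
  rewrite vsub_addadd in H.
  pose proof (nrm_triangle _ W (vsub x q1) (vsub y q2) (mem_sub _ _ _ Hx (QW _ Hq1)) (mem_sub _ _ _ Hy (QW _ Hq2))).
  lra.
Qed.

Lemma pQ_scal a x : 0 <= a -> mem W x -> pQ (vscal a x) = a * pQ x.
Proof.
  intros Ha Hx. destruct (Req_dec a 0) as [->|Hne].
  - rewrite vscal0, pQ_Q by auto. ring.
  - assert (Hp : a > 0) by lra.
    assert (Hax : mem W (vscal a x)) by (apply mem_scal; auto).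
    apply Rle_antisym.
    + apply le_eps. intros eps He.
      destruct (inf_approx _ _ (pQ_spec x Hx) (eps/a)) as [r1 [[q1 [Hq1 ->]] L1]].
      { apply Rdiv_lt_0_compat; lra. }
      pose proof (pQ_lb (vscal a x) (vscal a q1) Hax (Qscal _ _ Hp Hq1)).
      rewrite <- vscal_sub, nrm_scal_pos in H by (try lra; apply mem_sub; auto).
      assert (a * nrm W (vsub x q1) <= a * (pQ x + eps / a)) by (apply Rmult_le_compat_l; lra).
      replace (a * (pQ x + eps / a)) with (a * pQ x + eps) in H0 by (field; lra). lra.
    + apply (proj2 (pQ_spec (vscal a x) Hax)). intros r [q [Hq ->]].
      assert (Eq : q = vscal a (vscal (/a) q)).
      { rewrite vscal_assoc. replace (a * /a) with 1 by (field; lra). symmetry; apply vscal_1. }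
      assert (Hq' : Q (vscal (/a) q)) by (apply Qscal; auto; apply Rinv_0_lt_compat; lra).
      rewrite Eq, <- vscal_sub, nrm_scal_pos by (try lra; apply mem_sub; auto).
      apply Rmult_le_compat_l; [lra|]. apply pQ_lb; auto.
Qed.
End ConeDist.

Definition seqVS : VS.
Proof.
  refine {| car := nat -> R; vzero := fun _ => 0; vadd := fun s t k => s k + t k;
            vopp := fun s k => - s k; vscal := fun a s k => a * s k |};
  intros; apply functional_extensionality; intro k; ring.
Defined.

Lemma Rabs_le_between x C : Rabs x <= C -> - C <= x <= C.
Proof. unfold Rabs; destruct (Rcase_abs x); intros; lra. Qed.

Definition bnd (s : seqVS) := exists C, forall k, Rabs (s k) <= C.
Definition TB (s : seqVS) := fun B => exists n, forall k, (n <= k)%nat -> s k <= B.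
Definition plim (s : seqVS) := Rinf (TB s).

Lemma plim_spec s : bnd s -> is_inf (TB s) (plim s).
Proof.
  intros [C HC]. apply Rinf_spec.
  - exists C, 0%nat. intros k _. pose proof (HC k). apply Rabs_le_between in H; lra.
  - exists (- C). intros B [n Hn]. pose proof (Hn n (le_n n)). pose proof (HC n).
    apply Rabs_le_between in H0; lra.
Qed.

Lemma bnd_add s t : bnd s -> bnd t -> bnd (vadd s t).
Proof.
  intros [C1 H1] [C2 H2]. exists (C1 + C2). intro k. simpl.
  eapply Rle_trans. apply Rabs_triang. pose proof (H1 k); pose proof (H2 k). lra.
Qed.
Lemma bnd_scal a s : bnd s -> bnd (vscal a s).
Proof.
  intros [C H]. exists (Rabs a * C). intro k. simpl. rewrite Rabs_mult.
  apply Rmult_le_compat_l; auto. apply Rabs_pos.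
Qed.

Lemma banach_lim : exists L : seqVS -> R, lin_on bnd L /\
  forall s, bnd s -> forall n B, (forall k, (n <= k)%nat -> s k <= B) -> L s <= B.
Proof.
  assert (Hb0 : bnd vzero) by (exists 0; intro k; simpl; rewrite Rabs_R0; lra).
  destruct (HB bnd plim Hb0 bnd_add bnd_scal) with (x0 := @vzero seqVS) as [L [HL [Hp _]]]; auto.
  - intros s t Hs Ht. apply le_eps. intros eps He.
    destruct (inf_approx _ _ (plim_spec s Hs) (eps/2)) as [B1 [[n1 H1] L1]]; [lra|].
    destruct (inf_approx _ _ (plim_spec t Ht) (eps/2)) as [B2 [[n2 H2] L2]]; [lra|].
    assert (plim (vadd s t) <= B1 + B2).
    { apply (proj1 (plim_spec _ (bnd_add _ _ Hs Ht))). exists (max n1 n2). intros k Hk.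
      simpl. pose proof (H1 k ltac:(lia)). pose proof (H2 k ltac:(lia)). lra. }
    lra.
  - intros a s Ha Hs. destruct (Req_dec a 0) as [->|Hne].
    + rewrite Rmult_0_l. apply Rle_antisym.
      * apply (proj1 (plim_spec _ (bnd_scal _ _ Hs))). exists 0%nat. intros k _. simpl. lra.
      * apply (proj2 (plim_spec _ (bnd_scal _ _ Hs))). intros B [n Hn].
        pose proof (Hn n (le_n n)). simpl in H. lra.
    + assert (Hp : a > 0) by lra.
      apply Rle_antisym.
      * assert (plim (vscal a s) / a <= plim s).
        { apply (proj2 (plim_spec _ Hs)). intros B [n Hn].
          assert (plim (vscal a s) <= a * B).
          { apply (proj1 (plim_spec _ (bnd_scal _ _ Hs))). exists n. intros k Hk. simpl.
            apply Rmult_le_compat_l; auto. }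
          apply (Rmult_le_reg_l a); [lra|].
          replace (a * (plim (vscal a s) / a)) with (plim (vscal a s)) by (field; lra). lra. }
        apply (Rmult_le_compat_l a) in H; [|lra].
        replace (a * (plim (vscal a s) / a)) with (plim (vscal a s)) in H by (field; lra). lra.
      * apply (proj2 (plim_spec _ (bnd_scal _ _ Hs))). intros B [n Hn].
        assert (plim s <= B / a).
        { apply (proj1 (plim_spec _ Hs)). exists n. intros k Hk.
          pose proof (Hn k Hk). simpl in H.
          apply (Rmult_le_reg_l a); [lra|].
          replace (a * (B / a)) with B by (field; lra). lra. }
        apply (Rmult_le_compat_l a) in H; [|lra].
        replace (a * (B / a)) with B in H by (field; lra). lra.
  - exists L. split; auto. intros s Hs n B Hn.
    eapply Rle_trans. apply Hp; auto. apply (proj1 (plim_spec s Hs)). exists n; auto.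
Qed.

Lemma Rabs_le_of x C : x <= C -> - x <= C -> Rabs x <= C.
Proof. unfold Rabs; destruct (Rcase_abs x); intros; lra. Qed.

Lemma dual_of_dom {Y : VS} (W : NormedSub Y) (f : Y -> R) :
  lin_on (mem W) f -> (forall x, mem W x -> f x <= nrm W x) ->
  is_dual_elt W f /\ forall x, mem W x -> Rabs (f x) <= nrm W x.
Proof.
  intros [La Ls] Hp.
  assert (Hb : forall x, mem W x -> Rabs (f x) <= nrm W x).
  { intros x Hx. apply Rabs_le_of; auto.
    pose proof (Hp (vscal (-1) x) (mem_scal _ _ _ _ Hx)). rewrite Ls, nrm_scal in H by auto.
    replace (Rabs (-1)) with 1 in H by (rewrite Rabs_left; lra). lra. }
  split; auto. split; auto. split; auto. exists 1. intros x Hx. rewrite Rmult_1_l; auto.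
Qed.

Lemma norming {Y : VS} (W : NormedSub Y) (x0 : Y) : mem W x0 ->
  exists f, is_dual_elt W f /\ (forall x, mem W x -> Rabs (f x) <= nrm W x) /\ f x0 = nrm W x0.
Proof.
  intro Hx0.
  destruct (HB (mem W) (nrm W) (mem_0 _ W) (mem_add _ W) (mem_scal _ W)) with (x0 := x0)
    as [f [Hl [Hp Hf]]]; auto.
  - apply nrm_triangle.
  - intros; apply nrm_scal_pos; auto.
  - destruct (dual_of_dom W f Hl Hp). exists f; auto.
Qed.

Lemma weak_lim {Y : VS} (W : NormedSub Y) (gs : nat -> Y) (Bg : R) :
  reflexive W -> (forall k, mem W (gs k)) -> (forall k, nrm W (gs k) <= Bg) ->
  exists g, mem W g /\ forall f, is_dual_elt W f ->
    forall n B, (forall k, (n <= k)%nat -> f (gs k) <= B) -> f g <= B.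
Proof.
  intros Hrefl Hm HB0.
  destruct banach_lim as [L [[La Ls] Lb]].
  pose (sq (F : Y -> R) := (fun k => F (gs k)) : seqVS).
  assert (Hbnd : forall F, is_dual_elt W F -> bnd (sq F)).
  { intros F [_ [_ [C HC]]]. exists (Rabs C * Bg). intro k. unfold sq.
    eapply Rle_trans. apply HC; auto.
    eapply Rle_trans. apply Rmult_le_compat_r. apply nrm_nonneg; auto. apply RRle_abs.
    apply Rmult_le_compat_l. apply Rabs_pos. auto. }
  pose (Phi F := L (sq F)).
  assert (Hbid : is_bidual_elt W Phi).
  { split; [|split; [|split]].
    - intros F G HF HG E. unfold Phi. f_equal. unfold sq. apply functional_extensionality.
      intro k; apply E; auto.
    - intros F G HF HG. unfold Phi. rewrite <- La by (apply Hbnd; auto). reflexivity.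
    - intros a F HF. unfold Phi. rewrite <- Ls by (apply Hbnd; auto). reflexivity.
    - exists (Rmax Bg 0). intros F Mb HF [HM HFb].
      assert (Hk : forall k, Rabs (sq F k) <= Rmax Bg 0 * Mb).
      { intro k. unfold sq. eapply Rle_trans. apply HFb; auto. rewrite (Rmult_comm (Rmax Bg 0)).
        apply Rmult_le_compat_l; auto. eapply Rle_trans; [apply HB0|apply Rmax_l]. }
      apply Rabs_le_of.
      + unfold Phi. apply (Lb _ (Hbnd F HF) 0%nat). intros k _. pose proof (Hk k).
        apply Rabs_le_between in H. lra.
      + unfold Phi. replace (- L (sq F)) with (L (vscal (-1) (sq F))) by (rewrite Ls by (apply Hbnd; auto); ring).
        apply (Lb _ (bnd_scal _ _ (Hbnd F HF)) 0%nat). intros k _. pose proof (Hk k).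
        apply Rabs_le_between in H. simpl. lra. }
  destruct (Hrefl Phi Hbid) as [g [Hg Hgf]].
  exists g. split; auto. intros f Hf n B Hn. rewrite <- Hgf by auto. unfold Phi.
  apply (Lb _ (Hbnd f Hf) n). exact Hn.
Qed.

Lemma nat_above r : exists N : nat, r < INR N.
Proof.
  destruct (archimed r) as [H _]. exists (Z.to_nat (up r)).
  destruct (Z_le_gt_dec 0 (up r)).
  - rewrite INR_IZR_INZ, Z2Nat.id; auto.
  - replace (Z.to_nat (up r)) with 0%nat by lia. simpl. apply Rlt_trans with (IZR (up r)); auto.
    apply IZR_lt. lia.
Qed.

Lemma cv_inv (a : nat -> R) : (forall k, 0 <= a k <= / (INR k + 1)) -> Un_cv a 0.
Proof.
  intros H eps He. destruct (nat_above (/ eps)) as [N HN]. exists N. intros n Hn.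
  unfold R_dist. rewrite Rminus_0_r. destruct (H n) as [H1 H2].
  rewrite Rabs_right by lra. eapply Rle_lt_trans. apply H2.
  assert (INR N <= INR n) by (apply le_INR; lia).
  assert (0 < / eps) by (apply Rinv_0_lt_compat; lra).
  rewrite <- (Rinv_inv eps). apply Rinv_lt_contravar.
  - apply Rmult_lt_0_compat; lra.
  - lra.
Qed.

Lemma div_nonneg a b : 0 <= a -> 0 < b -> 0 <= a / b.
Proof. intros. unfold Rdiv. apply Rmult_le_pos; [lra|left; apply Rinv_0_lt_compat; lra]. Qed.
Lemma div_le1 a b : a <= b -> 0 < b -> a / b <= 1.
Proof. intros. apply (Rmult_le_reg_l b); auto. replace (b * (a / b)) with a by (field; lra). lra. Qed.

Section Grad.
Context {X Y : VS} (V : NormedSub X) (W : NormedSub Y) (Rel : X -> Y -> Prop).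
Hypothesis GS : gradient_space V W Rel.

Lemma G1 : forall u g u' g', Rel u g -> Rel u' g' -> Rel (vadd u u') (vadd g g').
Proof. apply (proj1 (proj1 GS)). Qed.
Lemma G2 : forall u g a, Rel u g -> a > 0 -> Rel (vscal a u) (vscal a g).
Proof. apply (proj2 (proj1 GS)). Qed.
Lemma Wrefl : reflexive W.
Proof. destruct GS as [_ [_ [[[_ H] _] _]]]. exact H. Qed.
Lemma G4 : forall u g (us : nat -> X) (gs : nat -> Y),
      mem V u -> mem W g -> (forall i, mem V (us i)) -> (forall i, mem W (gs i)) ->
      (forall i, Rel (us i) (gs i)) ->
      Un_cv (fun i => nrm V (vsub u (us i))) 0 ->
      Un_cv (fun i => nrm W (vsub g (gs i))) 0 ->
      Rel u g.
Proof. destruct GS as [_ [_ [_ [_ H]]]]. exact H. Qed.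


Lemma near_points (u : X) (g : Y) (us : nat -> X) (gs : nat -> Y) :
  mem V u -> mem W g -> (forall i, mem V (us i)) -> (forall i, mem W (gs i)) ->
  (forall i, Rel (us i) (gs i)) ->
  Un_cv (fun i => nrm V (vsub (us i) u)) 0 ->
  (forall f, is_dual_elt W f -> forall n B, (forall k, (n <= k)%nat -> f (gs k) <= B) -> f g <= B) ->
  forall eps del, eps > 0 -> del > 0 ->
  exists x c, mem V x /\ mem W c /\ Rel x c /\ nrm V (vsub x u) <= eps /\ nrm W (vsub g c) < del.
Proof.
  intros Hu Hg Hus Hgs HR Hcv Hw eps del He Hd. apply NNPP. intro Hn.
  assert (FAR : forall x c, mem V x -> mem W c -> Rel x c -> nrm V (vsub x u) <= eps ->
                  del <= nrm W (vsub g c)).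
  { intros x c H1 H2 H3 H4. apply Rnot_lt_le. intro. apply Hn. exists x, c; auto. }
  destruct (Hcv eps He) as [N HN].
  assert (HNk : forall k, (k >= N)%nat -> nrm V (vsub (us k) u) < eps).
  { intros k Hk. specialize (HN k Hk). unfold R_dist in HN. rewrite Rminus_0_r in HN.
    eapply Rle_lt_trans; [apply Rle_abs|exact HN]. }

  set (d0 := nrm W (vsub g (gs N))).
  assert (Hd0 : del <= d0).
  { apply (FAR (us N) (gs N)); auto. apply Rlt_le, HNk; lia. }
  set (sg := del / (2 * d0)).
  assert (Hsg : 0 < sg) by (apply Rdiv_lt_0_compat; lra).
  set (w := vscal sg (vsub g (gs N))).
  assert (Hwm : mem W w) by (apply mem_scal, mem_sub; auto).
  assert (Hnw : nrm W w = del / 2).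
  { unfold w. rewrite nrm_scal_pos by (try lra; apply mem_sub; auto). fold d0. unfold sg. field. lra. }
  pose (Q := fun h => exists s t X' c', 0 <= s /\ 0 <= t /\ t <= s /\ mem V X' /\ mem W c' /\
              (Rel X' c' \/ (X' = vzero /\ c' = vzero)) /\
              nrm V (vadd X' (vscal (-s) u)) <= s * eps /\
              h = vadd (vadd c' (vscal (-s) g)) (vscal t w)).
  assert (QW : forall q, Q q -> mem W q).
  { intros q [s [t [X' [c' [_ [_ [_ [_ [Hc [_ [_ ->]]]]]]]]]]].
    apply mem_add; apply mem_scal || apply mem_add; auto; apply mem_scal; auto. }
  assert (Q0 : Q vzero).
  { exists 0, 0, vzero, vzero. repeat split; try lra; try apply mem_0.
    - right; auto.
    - replace (vadd vzero (vscal (-0) u)) with (@vzero X) by vring (u :: nil).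
      rewrite nrm_zero. lra.
    - vring (g :: w :: nil). }
  assert (Qadd : forall q1 q2, Q q1 -> Q q2 -> Q (vadd q1 q2)).
  { intros q1 q2 [s1 [t1 [X1 [c1 [A1 [B1 [C1 [D1 [E1 [F1 [G1' ->]]]]]]]]]]]
                 [s2 [t2 [X2 [c2 [A2 [B2 [C2 [D2 [E2 [F2 [G2' ->]]]]]]]]]]].
    exists (s1 + s2), (t1 + t2), (vadd X1 X2), (vadd c1 c2).
    repeat split; try lra; try (apply mem_add; auto).
    - destruct F1 as [F1|[-> ->]]; destruct F2 as [F2|[-> ->]].
      + left; apply G1; auto.
      + left. rewrite !vadd_0. auto.
      + left. rewrite !v0l. auto.
      + right. split; apply vadd_0.
    - replace (vadd (vadd X1 X2) (vscal (- (s1 + s2)) u)) with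
        (vadd (vadd X1 (vscal (-s1) u)) (vadd X2 (vscal (-s2) u))) by vring (X1 :: X2 :: u :: nil).
      eapply Rle_trans. apply nrm_triangle; apply mem_add; auto; apply mem_scal; auto. lra.
    - vring (c1 :: c2 :: g :: w :: nil). }
  assert (Qscal : forall a q, a > 0 -> Q q -> Q (vscal a q)).
  { intros a q Ha [s [t [X' [c' [A1 [B1 [C1 [D1 [E1 [F1 [G1' ->]]]]]]]]]]].
    exists (a * s), (a * t), (vscal a X'), (vscal a c').
    repeat split; try (apply Rmult_le_pos; lra); try (apply Rmult_le_compat_l; lra);
      try (apply mem_scal; auto).
    - destruct F1 as [F1|[-> ->]].
      + left; apply G2; auto.
      + right. rewrite !vscal_z; split; auto.
    - replace (vadd (vscal a X') (vscal (- (a * s)) u)) with (vscal a (vadd X' (vscal (-s) u)))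
        by vring (X' :: u :: nil).
      rewrite nrm_scal_pos by (try lra; apply mem_add; auto; apply mem_scal; auto).
      replace (a * s * eps) with (a * (s * eps)) by ring. apply Rmult_le_compat_l; lra.
    - vring (c' :: g :: w :: nil). }
  set (x0 := vsub g (gs N)).
  assert (Hx0 : mem W x0) by (apply mem_sub; auto).
  destruct (HB (mem W) (pQ W Q) (mem_0 _ W) (mem_add _ W) (mem_scal _ W)) with (x0 := x0)
    as [f [[La Ls] [Hfp Hf0]]]; auto.
  { apply pQ_add; auto. }
  { apply pQ_scal; auto. }
  assert (Hfd : is_dual_elt W f).
  { apply (dual_of_dom W f); [split; auto|]. intros x Hx.
    eapply Rle_trans. apply Hfp; auto. apply pQ_le_nrm; auto. }
  assert (Hpx0 : del / 2 <= pQ W Q x0).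
  { apply (proj2 (pQ_spec W Q QW Q0 x0 Hx0)). intros r [q [Hq ->]].
    destruct Hq as [s [t [X' [c' [A1 [B1 [C1 [D1 [E1 [F1 [G1' ->]]]]]]]]]]].
    set (S := 1 + s).
    assert (HS : S >= 1) by (unfold S; lra).
    set (Xn := vscal (/S) (vadd (us N) X')).
    set (cn := vscal (/S) (vadd (gs N) c')).
    assert (HRn : Rel Xn cn).
    { unfold Xn, cn. apply G2; [|apply Rinv_0_lt_compat; lra].
      destruct F1 as [F1|[-> ->]].
      - apply G1; auto.
      - rewrite !vadd_0; auto. }
    assert (HXn : mem V Xn) by (apply mem_scal, mem_add; auto).
    assert (Hcn : mem W cn) by (apply mem_scal, mem_add; auto).
    assert (Hdn : nrm V (vsub Xn u) <= eps).
    { replace (vsub Xn u) with (vscal (/S) (vadd (vsub (us N) u) (vadd X' (vscal (-s) u))))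
        by (unfold Xn, S; vring (us N :: X' :: u :: nil)).
      rewrite nrm_scal_pos by (first [left; apply Rinv_0_lt_compat; lra |
        apply mem_add; [apply mem_sub|apply mem_add]; auto; apply mem_scal; auto]).
      assert (nrm V (vadd (vsub (us N) u) (vadd X' (vscal (-s) u))) <= S * eps).
      { eapply Rle_trans. apply nrm_triangle. apply mem_sub; auto.
        apply mem_add; auto; apply mem_scal; auto.
        pose proof (HNk N (le_n N)). unfold S. lra. }
      apply (Rmult_le_compat_l (/S)) in H; [|left; apply Rinv_0_lt_compat; lra].
      replace (/ S * (S * eps)) with eps in H by (field; lra). exact H. }
    pose proof (FAR Xn cn HXn Hcn HRn Hdn) as Hfar.
    replace (vsub x0 (vadd (vadd c' (vscal (- s) g)) (vscal t w)))
      with (vscal S (vsub (vsub g cn) (vscal (t / S) w)))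
      by (unfold x0, cn, S; vring (g :: (gs N) :: c' :: w :: nil)).
    rewrite nrm_scal_pos by (first [lra | apply mem_sub; [apply mem_sub|apply mem_scal]; auto]).
    pose proof (nrm_rev_tri W (vsub g cn) (vscal (t / S) w) (mem_sub _ _ _ Hg Hcn) (mem_scal _ _ _ _ Hwm)).
    rewrite nrm_scal_pos in H by (auto; apply div_nonneg; lra).
    rewrite Hnw in H.
    assert (t / S * (del / 2) <= del / 2).
    { assert (t / S <= 1) by (apply div_le1; unfold S; lra).
      assert (0 <= t / S) by (apply div_nonneg; lra). nra. }
    assert (del / 2 <= nrm W (vsub (vsub g cn) (vscal (t / S) w))) by lra.
    nra. }
  assert (Hfw : f w > 0).
  { unfold w. rewrite Ls by auto. fold x0. rewrite Hf0. apply Rmult_lt_0_compat; lra. }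
  assert (Hk : forall k, (N <= k)%nat -> f (gs k) <= f g - f w).
  { intros k Hk.
    assert (HQ : Q (vadd (vadd (gs k) (vscal (-1) g)) (vscal 1 w))).
    { exists 1, 1, (us k), (gs k). repeat split; try lra; auto.
      replace (vadd (us k) (vscal (- (1)) u)) with (vsub (us k) u) by (rewrite vsubE; repeat f_equal; ring).
      pose proof (HNk k Hk). lra. }
    pose proof (Hfp _ (QW _ HQ)). rewrite pQ_Q in H by auto.
    rewrite !La, !Ls in H by (auto; try apply mem_add; try apply mem_scal; auto). lra. }
  pose proof (Hw f Hfd N (f g - f w) Hk). lra.
Qed.
End Grad.

Lemma inv_pos k : 0 < / (INR k + 1).
Proof. apply Rinv_0_lt_compat. pose proof (pos_INR k). lra. Qed.

Lemma inv_mono n k : (n <= k)%nat -> / (INR k + 1) <= / (INR n + 1).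
Proof.
  intro H. apply Rinv_le_contravar. pose proof (pos_INR n); lra.
  apply le_INR in H. lra.
Qed.

Lemma le_inv_all a b : (forall n, a <= b + / (INR n + 1)) -> a <= b.
Proof.
  intro H. apply le_eps. intros eps He. destruct (nat_above (/ eps)) as [N HN].
  eapply Rle_trans. apply (H N). apply Rplus_le_compat_l.
  assert (0 < / eps) by (apply Rinv_0_lt_compat; lra).
  rewrite <- (Rinv_inv eps). left. apply Rinv_lt_contravar; [apply Rmult_lt_0_compat|]; lra.
Qed.

Section Grad2.
Context {X Y : VS} (V : NormedSub X) (W : NormedSub Y) (Rel : X -> Y -> Prop).
Hypothesis GS : gradient_space V W Rel.

Lemma lsc (u : X) (us : nat -> X) (gs : nat -> Y) (Bg : R) :
  mem V u -> (forall i, mem V (us i)) -> (forall i, mem W (gs i)) ->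
  (forall i, Rel (us i) (gs i)) ->
  Un_cv (fun i => nrm V (vsub (us i) u)) 0 ->
  (forall i, nrm W (gs i) <= Bg) ->
  exists g, mem W g /\ Rel u g /\
    forall n B, (forall k, (n <= k)%nat -> nrm W (gs k) <= B) -> nrm W g <= B.
Proof.
  intros Hu Hus Hgs HR Hcv HB0.
  destruct (weak_lim W gs Bg (Wrefl V W Rel GS) Hgs HB0) as [g [Hg Hw]].
  exists g. split; auto. split.
  - pose (P k (xc : X * Y) := mem V (fst xc) /\ mem W (snd xc) /\ Rel (fst xc) (snd xc) /\
        nrm V (vsub (fst xc) u) <= / (INR k + 1) /\ nrm W (vsub g (snd xc)) < / (INR k + 1)).
    assert (HP : forall k, P k (epsilon (inhabits (@vzero X, @vzero Y)) (P k))).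
    { intro k. apply epsilon_spec.
      destruct (near_points V W Rel GS u g us gs Hu Hg Hus Hgs HR Hcv Hw (/ (INR k + 1)) (/ (INR k + 1)))
        as [x [c H]]; try apply inv_pos.
      exists (x, c). exact H. }
    set (xc k := epsilon (inhabits (@vzero X, @vzero Y)) (P k)) in HP.
    apply (G4 V W Rel GS u g (fun k => fst (xc k)) (fun k => snd (xc k))); auto.
    + intro i; apply (HP i).
    + intro i; apply (HP i).
    + intro i; apply (HP i).
    + apply cv_inv. intro k. destruct (HP k) as [H1 [_ [_ [H4 _]]]].
      rewrite nrm_sym by auto. split; auto. apply nrm_nonneg, mem_sub; auto.
    + apply cv_inv. intro k. destruct (HP k) as [_ [H2 [_ [_ H5]]]].
      split; [apply nrm_nonneg, mem_sub; auto | apply Rlt_le; exact H5].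
  - intros n B Hn. destruct (norming W g Hg) as [f [Hfd [Hfb Hfg]]].
    rewrite <- Hfg. apply (Hw f Hfd n B). intros k Hk.
    eapply Rle_trans; [apply Rle_abs|]. eapply Rle_trans; [apply Hfb; auto|]. auto.
Qed.

Lemma mg_exists (u : X) : Sob V W Rel u -> is_min_grad W Rel u (mingrad W Rel u).
Proof.
  intros [Hu [g0 [Hg0 HR0]]].
  unfold mingrad. apply epsilon_spec.
  pose (E := fun r => exists h, mem W h /\ Rel u h /\ r = nrm W h).
  destruct (inf_ex E) as [d [Hd1 Hd2]].
  { exists (nrm W g0), g0; auto. }
  { exists 0. intros r [h [Hh [_ ->]]]. apply nrm_nonneg; auto. }
  pose (P k h := mem W h /\ Rel u h /\ nrm W h < d + / (INR k + 1)).
  assert (HP : forall k, P k (epsilon (inhabits (@vzero Y)) (P k))).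
  { intro k. apply epsilon_spec.
    destruct (inf_approx E d (conj Hd1 Hd2) (/ (INR k + 1)) (inv_pos k)) as [r [[h [Hh [HRh ->]]] Hr]].
    exists h. split; auto. }
  set (hs k := epsilon (inhabits (@vzero Y)) (P k)) in HP.
  destruct (lsc u (fun _ => u) hs (d + 1) Hu (fun _ => Hu) (fun k => proj1 (HP k))
              (fun k => proj1 (proj2 (HP k)))) as [g [Hg [HRg Hgb]]].
  - apply cv_inv. intro k. rewrite vsub_self, nrm_zero. split; [lra|left; apply inv_pos].
  - intro k. destruct (HP k) as [_ [_ H]]. assert (/ (INR k + 1) <= 1).
    { rewrite <- Rinv_1. apply Rinv_le_contravar; [lra|]. pose proof (pos_INR k); lra. }
    unfold hs; lra.
  - exists g. split; auto. split; auto. intros g' Hg' HR'.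
    assert (nrm W g <= d).
    { apply le_inv_all. intro n. apply Hgb with (n := n). intros k Hk.
      destruct (HP k) as [_ [_ H]]. pose proof (inv_mono n k Hk). unfold hs; lra. }
    pose proof (Hd1 (nrm W g') (ex_intro _ g' (conj Hg' (conj HR' eq_refl)))). lra.
Qed.

Lemma mg_mem (u : X) : Sob V W Rel u -> mem W (mingrad W Rel u).
Proof. intro H. apply (mg_exists u H). Qed.

Lemma mg_scal (v : X) (a : R) : a > 0 -> Sob V W Rel v -> Sob V W Rel (vscal a v) ->
  nrm W (mingrad W Rel (vscal a v)) = a * nrm W (mingrad W Rel v).
Proof.
  intros Ha Hv Hav.
  destruct (mg_exists v Hv) as [M1 [R1 P1]].
  destruct (mg_exists (vscal a v) Hav) as [M2 [R2 P2]].
  apply Rle_antisym.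
  - rewrite <- nrm_scal_pos by (auto; lra). apply P2.
    + apply mem_scal; auto.
    + apply (G2 V W Rel GS); auto.
  - assert (nrm W (mingrad W Rel v) <= / a * nrm W (mingrad W Rel (vscal a v))).
    { rewrite <- nrm_scal_pos by (auto; left; apply Rinv_0_lt_compat; lra). apply P1.
      + apply mem_scal; auto.
      + replace v with (vscal (/ a) (vscal a v)) at 1.
        * apply (G2 V W Rel GS); auto. apply Rinv_0_lt_compat; lra.
        * rewrite vscal_assoc. replace (/ a * a) with 1 by (field; lra). apply vscal_1. }
    apply (Rmult_le_compat_l a) in H; [|lra].
    replace (a * (/ a * nrm W (mingrad W Rel (vscal a v)))) with (nrm W (mingrad W Rel (vscal a v))) in H
      by (field; lra). lra.
Qed.
End Grad2.

Lemma strict_ge (phi : nat -> nat) : (forall i, (phi i < phi (S i))%nat) -> forall i, (i <= phi i)%nat.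
Proof. intros H i; induction i; [lia|]. specialize (H i). lia. Qed.

Theorem mainTheorem12 (X Y : VS) (V : NormedSub X) (W : NormedSub Y)
  (Rel : X -> Y -> Prop) (K : X -> Prop) :
  gradient_space V W Rel ->
  RK_cone V W Rel K ->
  regular_cone W Rel K ->
  (exists u0, K u0 /\ u0 <> vzero) ->
  exists u, K u /\ u <> vzero /\
    is_inf (fun r => exists v, K v /\ v <> vzero /\
                 r = nrm W (mingrad W Rel v) / nrm V v)
           (nrm W (mingrad W Rel u) / nrm V u) /\
    nrm W (mingrad W Rel u) / nrm V u > 0.
Proof.
  intros GS [[KS Kc] RK] Reg [u0 [Ku0 Hu0]].
  set (ratio v := nrm W (mingrad W Rel v) / nrm V v).
  set (E := fun r => exists v, K v /\ v <> vzero /\ r = nrm W (mingrad W Rel v) / nrm V v).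
  assert (Hmem : forall v, K v -> mem V v) by (intros v Kv; apply (KS v Kv)).
  assert (Hpos : forall v, K v -> v <> vzero -> nrm V v > 0).
  { intros v Kv Hv. destruct (nrm_nonneg _ V v (Hmem v Kv)) as [H|H]; [lra|].
    exfalso; apply Hv; apply (nrm_eq0 _ V); auto. }
  assert (Hgm : forall v, K v -> mem W (mingrad W Rel v)) by (intros v Kv; apply (mg_mem V W Rel GS); auto).
  assert (Hrat0 : forall v, K v -> v <> vzero -> 0 <= ratio v).
  { intros v Kv Hv. unfold ratio. apply div_nonneg. apply nrm_nonneg; auto. apply Hpos; auto. }
  destruct (inf_ex E) as [m Hm].
  { exists (ratio u0), u0; auto. }
  { exists 0. intros r [v [Kv [Hv ->]]]. apply Hrat0; auto. }
  pose (P k v := K v /\ v <> vzero /\ ratio v < m + / (INR k + 1)).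
  assert (HP : forall k, P k (epsilon (inhabits (@vzero X)) (P k))).
  { intro k. apply epsilon_spec.
    destruct (inf_approx E m Hm (/ (INR k + 1)) (inv_pos k)) as [r [[v [Kv [Hv ->]]] Hr]].
    exists v. split; auto. }
  set (vs k := epsilon (inhabits (@vzero X)) (P k)) in HP.
  set (ws k := vscal (/ nrm V (vs k)) (vs k)).
  assert (Hvs : forall k, K (vs k) /\ vs k <> vzero /\ ratio (vs k) < m + / (INR k + 1)) by exact HP.
  assert (Hinvp : forall k, / nrm V (vs k) > 0).
  { intro k. destruct (Hvs k) as [A [B _]]. apply Rinv_0_lt_compat, Hpos; auto. }
  assert (Kws : forall k, K (ws k)) by (intro k; apply Kc; [apply Hvs|apply Hinvp]).
  assert (Nws : forall k, nrm V (ws k) = 1).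
  { intro k. unfold ws. destruct (Hvs k) as [A [B _]].
    rewrite nrm_scal_pos by (try (left; apply Hinvp); apply Hmem; auto).
    field. apply Rgt_not_eq, Hpos; auto. }
  assert (Gws : forall k, nrm W (mingrad W Rel (ws k)) = ratio (vs k)).
  { intro k. unfold ws, ratio. destruct (Hvs k) as [A [B _]].
    rewrite (mg_scal V W Rel GS) by (auto; apply Hinvp).
    unfold Rdiv; ring. }
  assert (Hm0 : 0 <= m) by (apply (proj2 Hm); intros r [v [Kv [Hv ->]]]; apply Hrat0; auto).
  destruct (RK ws Kws) as [phi [u [Hphi [Ku Hcv]]]].
  { exists 1. intro i. rewrite Nws; lra. }
  { exists (m + 1). intro i. rewrite Gws. destruct (Hvs i) as [_ [_ H]].
    assert (/ (INR i + 1) <= 1).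
    { rewrite <- Rinv_1. apply Rinv_le_contravar; [lra|]. pose proof (pos_INR i); lra. }
    lra. }
  assert (Hu : mem V u) by auto.
  assert (Nu : nrm V u = 1).
  { apply Rle_antisym; apply le_eps; intros eps He; destruct (Hcv eps He) as [N HN];
      specialize (HN N (le_n N)); unfold R_dist in HN; rewrite Rminus_0_r in HN;
      pose proof (Rle_abs (nrm V (vsub (ws (phi N)) u))).
    - pose proof (nrm_rev_tri V u (ws (phi N)) Hu (Hmem _ (Kws _))).
      rewrite nrm_sym in H0 by auto. rewrite Nws in H0. lra.
    - pose proof (nrm_rev_tri V (ws (phi N)) u (Hmem _ (Kws _)) Hu).
      rewrite Nws in H0. lra. }
  assert (Hu0' : u <> vzero).
  { intro E0. rewrite E0, nrm_zero in Nu. lra. }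
  destruct (lsc V W Rel GS u (fun i => ws (phi i)) (fun i => mingrad W Rel (ws (phi i))) (m + 1) Hu
     (fun i => Hmem _ (Kws _)) (fun i => Hgm _ (Kws _))) as [g [Hg [HRg Hgb]]].
  { intro i. apply (mg_exists V W Rel GS); auto. }
  { exact Hcv. }
  { intro i. rewrite Gws. destruct (Hvs (phi i)) as [_ [_ H]].
    assert (/ (INR (phi i) + 1) <= 1).
    { rewrite <- Rinv_1. apply Rinv_le_contravar; [lra|]. pose proof (pos_INR (phi i)); lra. }
    lra. }
  assert (Hgm' : nrm W g <= m).
  { apply le_inv_all. intro n. apply Hgb with (n := n). intros k Hk.
    rewrite Gws. destruct (Hvs (phi k)) as [_ [_ H]].
    pose proof (strict_ge phi Hphi k).
    pose proof (inv_mono n (phi k) ltac:(lia)). lra. }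
  destruct (mg_exists V W Rel GS u (KS u Ku)) as [Mu [Ru Pu]].
  pose proof (Pu g Hg HRg) as Hle.
  assert (Hru : ratio u = nrm W (mingrad W Rel u)) by (unfold ratio; rewrite Nu; field).
  assert (Hmu : m <= ratio u) by (apply (proj1 Hm); exists u; auto).
  assert (Heq : ratio u = m) by lra.
  exists u. split; auto. split; auto. split.
  - fold (ratio u). rewrite Heq. exact Hm.
  - fold (ratio u). rewrite Hru.
    destruct (nrm_nonneg _ W _ Mu) as [H|H]; auto.
    exfalso. apply Hu0'. apply Reg; auto. apply (nrm_eq0 _ W); auto.
Qed.
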